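(* Let $\mathcal{U}=\begin{pmatrix}\mathcal{A}&\mathcal{M}\\ \mathcal{N}&\mathcal{B}\end{pmatrix}$ be a generalized matrix ring in which $\mathcal{A}$ and $\mathcal{B}$ are 2-torsion free. Let $\phi:\mathcal{U}\to\mathcal{U}$ be an additive mapping satisfying condition $(\mathbb{P})$, i.e. for all $U,V\in\mathcal{U}$ with $UV=VU=0$ one has $\phi(U)\circ V+U\circ\phi(V)=0$. Then there exist a Jordan derivation $\delta:\mathcal{U}\to\mathcal{U}$ and a multiplier $\eta:\mathcal{U}\to\mathcal{U}$ such that $\phi=\delta+\eta$. Moreover, if $\phi(I)=0$, then $\phi$ is a Jordan derivation.
   Context: A generalized matrix ring is built from: unital rings $\mathcal{A},\mathcal{B}$; a unital $(\mathcal{A},\mathcal{B})$-bimodule $\mathcal{M}$ which is faithful on both sides (if $A\in\mathcal{A}$ and $A\mathcal{M}=\{0\}$ then $A=0$; if $B\in\mathcal{B}$ and $\mathcal{M}B=\{0\}$ then $B=0$); a unital $(\mathcal{B},\mathcal{A})$-bimodule $\mathcal{N}$ (not necessarily faithful); and bimodule homomorphisms $\sigma:\mathcal{M}\otimes_{\mathcal{B}}\mathcal{N}\to\mathcal{A}$, $\rho:\mathcal{N}\otimes_{\mathcal{A}}\mathcal{M}\to\mathcal{B}$, written $MN=\sigma(M\otimes N)$, $NM=\rho(N\otimes M)$, satisfying $(MN)M'=M(NM')$ and $(NM)N'=N(MN')$ for all $M,M'\in\mathcal{M}$, $N,N'\in\mathcal{N}$. Then $\mathcal{U}$ is the set of matrices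 $\begin{pmatrix}A&M\\N&B\end{pmatrix}$ ($A\in\mathcal{A},M\in\mathcal{M},N\in\mathcal{N},B\in\mathcal{B}$) with the usual matrix addition and multiplication; it has identity $I$. A ring is 2-torsion free if $2X=0$ implies $X=0$. The Jordan product is $X\circ Y=XY+YX$. For a unital ring $\mathcal{R}$: an additive map $\delta:\mathcal{R}\to\mathcal{R}$ is a Jordan derivation if $\delta(X^2)=\delta(X)X+X\delta(X)$ for all $X$; an additive map $\eta:\mathcal{R}\to\mathcal{R}$ is a multiplier if $\eta(X)=\eta(I)X=X\eta(I)$ for all $X\in\mathcal{R}$. *)

(* Defs.v *)
From HB Require Import structures.
From mathcomp Require Import all_boot all_order all_algebra.
Set Implicit Arguments. Unset Strict Implicit. Unset Printing Implicit Defensive.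
Import GRing.Theory.
Local Open Scope ring_scope.

(* Data of a generalized matrix ring (A M; N B):
   A, B unital rings, M an (A,B)-bimodule (faithful on both sides),
   N a (B,A)-bimodule, sigma : M (x)_B N -> A, rho : N (x)_A M -> B
   bimodule homomorphisms (encoded as balanced biadditive maps), with the
   two associativity conditions. *)
Record GMRing (A B : pzRingType) (M N : zmodType) := {
  actAM : A -> M -> M;
  actMB : M -> B -> M;
  actBN : B -> N -> N;
  actNA : N -> A -> N;
  sig   : M -> N -> A;
  rh    : N -> M -> B;
  actAM_addl : forall a a' m, actAM (a + a') m = actAM a m + actAM a' m;
  actAM_addr : forall a m m', actAM a (m + m') = actAM a m + actAM a m';
  actAM_mul  : forall a a' m, actAM (a * a') m = actAM a (actAM a' m);
  actAM_1    : forall m, actAM 1 m = m;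
  actMB_addl : forall m m' b, actMB (m + m') b = actMB m b + actMB m' b;
  actMB_addr : forall m b b', actMB m (b + b') = actMB m b + actMB m b';
  actMB_mul  : forall m b b', actMB m (b * b') = actMB (actMB m b) b';
  actMB_1    : forall m, actMB m 1 = m;
  actM_assoc : forall a m b, actMB (actAM a m) b = actAM a (actMB m b);
  actBN_addl : forall b b' n, actBN (b + b') n = actBN b n + actBN b' n;
  actBN_addr : forall b n n', actBN b (n + n') = actBN b n + actBN b n';
  actBN_mul  : forall b b' n, actBN (b * b') n = actBN b (actBN b' n);
  actBN_1    : forall n, actBN 1 n = n;
  actNA_addl : forall n n' a, actNA (n + n') a = actNA n a + actNA n' a;
  actNA_addr : forall n a a', actNA n (a + a') = actNA n a + actNA n a';
  actNA_mul  : forall n a a', actNA n (a * a') = actNA (actNA n a) a';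
  actNA_1    : forall n, actNA n 1 = n;
  actN_assoc : forall b n a, actNA (actBN b n) a = actBN b (actNA n a);
  faithful_A : forall a, (forall m, actAM a m = 0) -> a = 0;
  faithful_B : forall b, (forall m, actMB m b = 0) -> b = 0;
  sig_addl : forall m m' n, sig (m + m') n = sig m n + sig m' n;
  sig_addr : forall m n n', sig m (n + n') = sig m n + sig m n';
  sig_bal  : forall m b n, sig (actMB m b) n = sig m (actBN b n);
  sig_lin  : forall a m n, sig (actAM a m) n = a * sig m n;
  sig_rin  : forall m n a, sig m (actNA n a) = sig m n * a;
  rh_addl : forall n n' m, rh (n + n') m = rh n m + rh n' m;
  rh_addr : forall n m m', rh n (m + m') = rh n m + rh n m';
  rh_bal  : forall n a m, rh (actNA n a) m = rh n (actAM a m);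
  rh_lin  : forall b n m, rh (actBN b n) m = b * rh n m;
  rh_rin  : forall n m b, rh n (actMB m b) = rh n m * b;
  gm_assocM : forall m n m', actAM (sig m n) m' = actMB m (rh n m');
  gm_assocN : forall n m n', actBN (rh n m) n' = actNA n (sig m n')
}.

Record gmx (A B : pzRingType) (M N : zmodType) := Gmx {
  g11 : A; g12 : M; g21 : N; g22 : B }.

Section GMOps.
Variables (A B : pzRingType) (M N : zmodType) (G : GMRing A B M N).

Definition gadd (X Y : gmx A B M N) : gmx A B M N :=
  Gmx (g11 X + g11 Y) (g12 X + g12 Y) (g21 X + g21 Y) (g22 X + g22 Y).

Definition gzero : gmx A B M N := Gmx 0 0 0 0.

Definition gmul (X Y : gmx A B M N) : gmx A B M N :=
  Gmx (g11 X * g11 Y + sig G (g12 X) (g21 Y))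
      (actAM G (g11 X) (g12 Y) + actMB G (g12 X) (g22 Y))
      (actBN G (g22 X) (g21 Y) + actNA G (g21 X) (g11 Y))
      (rh G (g21 X) (g12 Y) + g22 X * g22 Y).

Definition gone : gmx A B M N := Gmx 1 0 0 1.

Definition gjordan (X Y : gmx A B M N) := gadd (gmul X Y) (gmul Y X).

Definition g_additive (f : gmx A B M N -> gmx A B M N) :=
  forall X Y, f (gadd X Y) = gadd (f X) (f Y).

Definition g_jordan_derivation (d : gmx A B M N -> gmx A B M N) :=
  g_additive d /\ forall X, d (gmul X X) = gadd (gmul (d X) X) (gmul X (d X)).

Definition g_multiplier (e : gmx A B M N -> gmx A B M N) :=
  g_additive e /\ forall X, e X = gmul (e gone) X /\ e X = gmul X (e gone).

Definition g_condP (phi : gmx A B M N -> gmx A B M N) :=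
  forall U V, gmul U V = gzero -> gmul V U = gzero ->
    gadd (gjordan (phi U) V) (gjordan U (phi V)) = gzero.
End GMOps.

Definition two_torsion_free (R : zmodType) := forall x : R, x *+ 2 = 0 -> x = 0.

(* Main.v *)
Require Import Defs.
From HB Require Import structures.
From mathcomp Require Import all_boot all_order all_algebra.
Set Implicit Arguments. Unset Strict Implicit. Unset Printing Implicit Defensive.
Import GRing.Theory.
Local Open Scope ring_scope.

Section Basic.
Variables (A B : pzRingType) (M N : zmodType).

Lemma gmx_ext (X Y : gmx A B M N) :
  g11 X = g11 Y -> g12 X = g12 Y -> g21 X = g21 Y -> g22 X = g22 Y -> X = Y.
Proof. by case: X => ????; case: Y => ???? /= -> -> -> ->. Qed.

Definition gmx_to (X : gmx A B M N) := (g11 X, g12 X, g21 X, g22 X).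
Definition gmx_of (p : A * M * N * B) : gmx A B M N := Gmx p.1.1.1 p.1.1.2 p.1.2 p.2.
Lemma gmxK : cancel gmx_to gmx_of. Proof. by case. Qed.
HB.instance Definition _ := Choice.copy (gmx A B M N) (can_type gmxK).
End Basic.


Lemma front_there (V : zmodType) (x r h r' : V) : r = h + r' -> x + r = h + (x + r').
Proof. by move=> ->; rewrite addrCA. Qed.
Lemma front_last (V : zmodType) (h : V) : h = h + 0.
Proof. by rewrite addr0. Qed.
Lemma cs_neg (V : zmodType) (t r r' : V) : r = t + r' -> r' = 0 -> - t + r = 0.
Proof. by move=> -> ->; rewrite addr0 addNr. Qed.
Lemma cs_pos (V : zmodType) (h r r' : V) : r = - h + r' -> r' = 0 -> h + r = 0.
Proof. by move=> -> ->; rewrite addr0 subrr. Qed.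
Lemma cs_single_neg (V : zmodType) (t : V) : False -> - t = 0.
Proof. by []. Qed.

Lemma use_neg (V : zmodType) (s x : V) : s = 0 -> x = - s -> x = 0.
Proof. by move=> -> ->; rewrite oppr0. Qed.
Lemma use_pos (V : zmodType) (s x : V) : s = 0 -> x = s -> x = 0.
Proof. by move=> -> ->. Qed.
Lemma use_lin (V : zmodType) (s x y : V) : s = 0 -> x - y = s -> x = y.
Proof. by move=> -> /eqP; rewrite subr_eq0 => /eqP. Qed.
Lemma use_linN (V : zmodType) (s x y : V) : s = 0 -> x - y = - s -> x = y.
Proof. by move=> -> /eqP; rewrite oppr0 subr_eq0 => /eqP. Qed.
Lemma use_lin2 (V : zmodType) (s t x y : V) : s = 0 -> t = 0 -> x - y = s + t -> x = y.
Proof. by move=> -> -> /eqP; rewrite addr0 subr_eq0 => /eqP. Qed.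
Lemma negz (V : zmodType) (s : V) : s = 0 -> - s = 0.
Proof. by move=> ->; rewrite oppr0. Qed.
Ltac solve_front :=
  match goal with
  | |- ?y + ?r = ?t + ?e => unify y t; exact: erefl
  | |- ?y + ?r = ?t + ?e => apply: front_there; solve_front
  | |- ?y = ?t + ?e => unify y t; apply: front_last
  end.

Ltac zero_sum :=
  lazymatch goal with
  | |- 0 = 0 => reflexivity
  | |- - ?t + ?r = 0 => apply: (@cs_neg _ t r); [solve_front | zero_sum]
  | |- ?h + ?r = 0 => apply: (@cs_pos _ h r); [solve_front | zero_sum]
  end.

Lemma to_zero (V : zmodType) (x y : V) : x - y = 0 -> x = y.
Proof. by move/eqP; rewrite subr_eq0 => /eqP. Qed.

Ltac ac_close :=
  apply: to_zero; rewrite ?opprD ?opprK ?oppr0 -?addrA ?addr0 ?add0r; zero_sum.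

Section Ring.
Variables (A B : pzRingType) (M N : zmodType) (G : GMRing A B M N).
Definition gU (_ : GMRing A B M N) := gmx A B M N.
HB.instance Definition _ := Choice.on (gU G).
Definition gneg (X : gmx A B M N) : gmx A B M N := Gmx (- g11 X) (- g12 X) (- g21 X) (- g22 X).

Lemma gaddA : associative (@gadd A B M N).
Proof. by move=> x y z; apply: gmx_ext; rewrite /= addrA. Qed.
Lemma gaddC : commutative (@gadd A B M N).
Proof. by move=> x y; apply: gmx_ext; rewrite /= addrC. Qed.
Lemma gadd0 : left_id (gzero A B M N) (@gadd A B M N).
Proof. by move=> x; apply: gmx_ext; rewrite /= add0r. Qed.
Lemma gaddN : left_inverse (gzero A B M N) gneg (@gadd A B M N).
Proof. by move=> x; apply: gmx_ext; rewrite /= addNr. Qed.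
HB.instance Definition _ := GRing.isZmodule.Build (gU G) gaddA gaddC gadd0 gaddN.
End Ring.




Section GLem.
Variables (A B : pzRingType) (M N : zmodType) (G : GMRing A B M N).
Lemma add0_gen (U V : zmodType) (f : U -> V) : (forall x y, f (x + y) = f x + f y) -> f 0 = 0.
Proof. move=> h; have E := h 0 0; rewrite addr0 in E; apply: (addrI (f 0)); by rewrite -E addr0. Qed.
Lemma addN_gen (U V : zmodType) (f : U -> V) : (forall x y, f (x + y) = f x + f y) -> forall x, f (- x) = - f x.
Proof. move=> h x; have E := h x (- x); rewrite subrr (add0_gen h) in E.
apply: (addrI (f x)); by rewrite -E subrr. Qed.
Lemma sig0l n : sig G 0 n = 0. Proof. exact: (add0_gen (fun m => sig_addl G m ^~ n)). Qed.
Lemma sig0r m : sig G m 0 = 0. Proof. exact: (add0_gen (sig_addr G m)). Qed.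
Lemma sigNl m n : sig G (- m) n = - sig G m n. Proof. exact: (addN_gen (fun m => sig_addl G m ^~ n)). Qed.
Lemma sigNr m n : sig G m (- n) = - sig G m n. Proof. exact: (addN_gen (sig_addr G m)). Qed.
Lemma rh0l m : rh G 0 m = 0. Proof. exact: (add0_gen (fun n => rh_addl G n ^~ m)). Qed.
Lemma rh0r n : rh G n 0 = 0. Proof. exact: (add0_gen (rh_addr G n)). Qed.
Lemma rhNl n m : rh G (- n) m = - rh G n m. Proof. exact: (addN_gen (fun n => rh_addl G n ^~ m)). Qed.
Lemma rhNr n m : rh G n (- m) = - rh G n m. Proof. exact: (addN_gen (rh_addr G n)). Qed.
Lemma actAM0l m : actAM G 0 m = 0. Proof. exact: (add0_gen (fun a => actAM_addl G a ^~ m)). Qed.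
Lemma actAM0r a : actAM G a 0 = 0. Proof. exact: (add0_gen (actAM_addr G a)). Qed.
Lemma actAMNl a m : actAM G (- a) m = - actAM G a m. Proof. exact: (addN_gen (fun a => actAM_addl G a ^~ m)). Qed.
Lemma actAMNr a m : actAM G a (- m) = - actAM G a m. Proof. exact: (addN_gen (actAM_addr G a)). Qed.
Lemma actMB0l b : actMB G 0 b = 0. Proof. exact: (add0_gen (fun m => actMB_addl G m ^~ b)). Qed.
Lemma actMB0r m : actMB G m 0 = 0. Proof. exact: (add0_gen (actMB_addr G m)). Qed.
Lemma actMBNl m b : actMB G (- m) b = - actMB G m b. Proof. exact: (addN_gen (fun m => actMB_addl G m ^~ b)). Qed.
Lemma actMBNr m b : actMB G m (- b) = - actMB G m b. Proof. exact: (addN_gen (actMB_addr G m)). Qed.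
Lemma actBN0l n : actBN G 0 n = 0. Proof. exact: (add0_gen (fun b => actBN_addl G b ^~ n)). Qed.
Lemma actBN0r b : actBN G b 0 = 0. Proof. exact: (add0_gen (actBN_addr G b)). Qed.
Lemma actBNNl b n : actBN G (- b) n = - actBN G b n. Proof. exact: (addN_gen (fun b => actBN_addl G b ^~ n)). Qed.
Lemma actBNNr b n : actBN G b (- n) = - actBN G b n. Proof. exact: (addN_gen (actBN_addr G b)). Qed.
Lemma actNA0l a : actNA G 0 a = 0. Proof. exact: (add0_gen (fun n => actNA_addl G n ^~ a)). Qed.
Lemma actNA0r n : actNA G n 0 = 0. Proof. exact: (add0_gen (actNA_addr G n)). Qed.
Lemma actNANl n a : actNA G (- n) a = - actNA G n a. Proof. exact: (addN_gen (fun n => actNA_addl G n ^~ a)). Qed.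
Lemma actNANr n a : actNA G n (- a) = - actNA G n a. Proof. exact: (addN_gen (actNA_addr G n)). Qed.
Lemma actM_assocV a m b : actAM G a (actMB G m b) = actMB G (actAM G a m) b.
Proof. by rewrite actM_assoc. Qed.
Lemma actN_assocV b n a : actBN G b (actNA G n a) = actNA G (actBN G b n) a.
Proof. by rewrite actN_assoc. Qed.
Lemma gm_assocMV m n m' : actMB G m (rh G n m') = actAM G (sig G m n) m'.
Proof. by rewrite gm_assocM. Qed.
Lemma gm_assocNV n m n' : actNA G n (sig G m n') = actBN G (rh G n m) n'.
Proof. by rewrite gm_assocN. Qed.
End GLem.

Ltac gsimp0 := rewrite ?(mulrDl, mulrDr, sig_addl, sig_addr, rh_addl, rh_addr, actAM_addl, actAM_addr,
   actMB_addl, actMB_addr, actBN_addl, actBN_addr, actNA_addl, actNA_addr,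
   mulNr, mulrN, opprK, mulr0, mul0r, sig0l, sig0r, sigNl, sigNr, rh0l, rh0r, rhNl, rhNr,
   actAM0l, actAM0r, actAMNl, actAMNr, actMB0l, actMB0r, actMBNl, actMBNr,
   actBN0l, actBN0r, actBNNl, actBNNr, actNA0l, actNA0r, actNANl, actNANr,
   oppr0, addr0, add0r, opprD).
Ltac gnormA := do 3 (gsimp0; rewrite ?(actAM_mul, actMB_mul, actBN_mul, actNA_mul, actM_assoc, actN_assocV,
   sig_lin, sig_rin, sig_bal, gm_assocN, gm_assocMV, mulrA, actAM_1, actMB_1, actBN_1, actNA_1, mul1r, mulr1)).
Ltac gnormB := do 3 (gsimp0; rewrite ?(actAM_mul, actMB_mul, actBN_mul, actNA_mul, actM_assocV, actN_assoc,
   rh_lin, rh_rin, rh_bal, gm_assocM, gm_assocNV, mulrA, actAM_1, actMB_1, actBN_1, actNA_1, mul1r, mulr1)).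

Section Ring2.
Variables (A B : pzRingType) (M N : zmodType) (G : GMRing A B M N).
Lemma gmulA : associative (gmul G).
Proof.
move=> x y z; apply: gmx_ext => /=.
- gnormA; try ac_close.
- gnormA; try ac_close.
- gnormA; try ac_close.
- gnormB; try ac_close.
Qed.

Lemma gmul1 : left_id (gone A B M N) (gmul G).
Proof. move=> x; apply: gmx_ext => /=; gnormA; try ac_close; gnormB; ac_close. Qed.
Lemma gmulr1 : right_id (gone A B M N) (gmul G).
Proof. move=> x; apply: gmx_ext => /=; gnormA; try ac_close; gnormB; ac_close. Qed.
Lemma gmulDl : left_distributive (gmul G) (@gadd A B M N).
Proof. move=> x y z; apply: gmx_ext => /=; gnormA; try ac_close; gnormB; ac_close. Qed.
Lemma gmulDr : right_distributive (gmul G) (@gadd A B M N).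
Proof. move=> x y z; apply: gmx_ext => /=; gnormA; try ac_close; gnormB; ac_close. Qed.
HB.instance Definition _ := GRing.Zmodule_isPzRing.Build (gU G) gmulA gmul1 gmulr1 gmulDl gmulDr.
End Ring2.


Section Proj.
Variables (A B : pzRingType) (M N : zmodType) (G : GMRing A B M N).
Implicit Types x y : gU G.
Local Notation "'E11' a" := ((Gmx a 0 0 0 : gU G)) (at level 10, a at level 9).
Local Notation "'E12' a" := ((Gmx 0 a 0 0 : gU G)) (at level 10, a at level 9).
Local Notation "'E21' a" := ((Gmx 0 0 a 0 : gU G)) (at level 10, a at level 9).
Local Notation "'E22' a" := ((Gmx 0 0 0 a : gU G)) (at level 10, a at level 9).
Lemma g11M x y : g11 (x * y) = g11 x * g11 y + sig G (g12 x) (g21 y). Proof. by []. Qed.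
Lemma g12M x y : g12 (x * y) = actAM G (g11 x) (g12 y) + actMB G (g12 x) (g22 y). Proof. by []. Qed.
Lemma g21M x y : g21 (x * y) = actBN G (g22 x) (g21 y) + actNA G (g21 x) (g11 y). Proof. by []. Qed.
Lemma g22M x y : g22 (x * y) = rh G (g21 x) (g12 y) + g22 x * g22 y. Proof. by []. Qed.
Lemma g11D x y : g11 (x + y) = g11 x + g11 y. Proof. by []. Qed.
Lemma g12D x y : g12 (x + y) = g12 x + g12 y. Proof. by []. Qed.
Lemma g21D x y : g21 (x + y) = g21 x + g21 y. Proof. by []. Qed.
Lemma g22D x y : g22 (x + y) = g22 x + g22 y. Proof. by []. Qed.
Lemma g11N x : g11 (- x) = - g11 x. Proof. by []. Qed.
Lemma g12N x : g12 (- x) = - g12 x. Proof. by []. Qed.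
Lemma g21N x : g21 (- x) = - g21 x. Proof. by []. Qed.
Lemma g22N x : g22 (- x) = - g22 x. Proof. by []. Qed.
Lemma g110 : g11 (0 : gU G) = 0. Proof. by []. Qed.
Lemma g120 : g12 (0 : gU G) = 0. Proof. by []. Qed.
Lemma g210 : g21 (0 : gU G) = 0. Proof. by []. Qed.
Lemma g220 : g22 (0 : gU G) = 0. Proof. by []. Qed.
Lemma g111 : g11 (1 : gU G) = 1. Proof. by []. Qed.
Lemma g121 : g12 (1 : gU G) = 0. Proof. by []. Qed.
Lemma g211 : g21 (1 : gU G) = 0. Proof. by []. Qed.
Lemma g221 : g22 (1 : gU G) = 1. Proof. by []. Qed.
Lemma gdecomp a m n b : (Gmx a m n b : gU G) =
  E11 a + E12 m + E21 n + E22 b.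
Proof. by apply: gmx_ext; rewrite /= ?addr0 ?add0r. Qed.
Lemma gext (x y : gU G) :
  g11 x = g11 y -> g12 x = g12 y -> g21 x = g21 y -> g22 x = g22 y -> x = y.
Proof. exact: gmx_ext. Qed.
Lemma e11D a a' : E11 (a + a') = E11 a + E11 a'.
Proof. by apply: gmx_ext; rewrite /= ?addr0. Qed.
Lemma e12D m m' : E12 (m + m') = E12 m + E12 m'.
Proof. by apply: gmx_ext; rewrite /= ?addr0. Qed.
Lemma e21D n n' : E21 (n + n') = E21 n + E21 n'.
Proof. by apply: gmx_ext; rewrite /= ?addr0. Qed.
Lemma e22D b b' : E22 (b + b') = E22 b + E22 b'.
Proof. by apply: gmx_ext; rewrite /= ?addr0. Qed.
Lemma e11N a : E11 (- a) = - E11 a.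
Proof. by apply: gmx_ext; rewrite /= ?oppr0. Qed.
Lemma e12N m : E12 (- m) = - E12 m.
Proof. by apply: gmx_ext; rewrite /= ?oppr0. Qed.
Lemma e21N n : E21 (- n) = - E21 n.
Proof. by apply: gmx_ext; rewrite /= ?oppr0. Qed.
Lemma e22N b : E22 (- b) = - E22 b.
Proof. by apply: gmx_ext; rewrite /= ?oppr0. Qed.
End Proj.

Ltac gproj := rewrite ?(g11M, g12M, g21M, g22M, g11D, g12D, g21D, g22D, g11N, g12N, g21N, g22N,
  g110, g120, g210, g220, g111, g121, g211, g221) /=.



Section Glue.
Variable R : pzRingType.
Definition condP (f : R -> R) := forall U V : R, U * V = 0 -> V * U = 0 ->
  f U * V + V * f U + (U * f V + f V * U) = 0.
Definition addf (f : R -> R) := forall x y, f (x + y) = f x + f y.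
Definition jord (f : R -> R) := forall X, f (X * X) = f X * X + X * f X.

Lemma condP_sub f g : condP f -> condP g -> condP (fun X => f X - g X).
Proof.
move=> hf hg U V h1 h2; have := hf U V h1 h2; have := hg U V h1 h2.
rewrite !mulrBl !mulrBr => E1 E2.
apply: (use_lin2 E2 (negz E1)); ac_close.
Qed.
Lemma addf_sub f g : addf f -> addf g -> addf (fun X => f X - g X).
Proof. move=> hf hg x y; rewrite hf hg; ac_close. Qed.
Lemma jord_add f g : jord f -> jord g -> jord (fun X => f X + g X).
Proof. move=> hf hg X; rewrite hf hg !mulrDl !mulrDr; ac_close. Qed.
Lemma jord_ext f g : (forall X, f X = g X) -> jord g -> jord f.
Proof. by move=> e hg X; rewrite !e hg. Qed.

Variable T : R.
Definition ad X := T * X - X * T.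
Lemma ad_add : addf ad.
Proof. move=> x y; rewrite /ad mulrDl mulrDr; ac_close. Qed.
Lemma ad_jord : jord ad.
Proof. move=> X; rewrite /ad !mulrBl !mulrBr !mulrA; ac_close. Qed.
Lemma ad_condP : condP ad.
Proof.
move=> U V h1 h2; rewrite /ad !mulrBl !mulrBr.
rewrite -!mulrA ?h1 ?h2 ?mulr0 !mulrA ?h1 ?h2 ?mul0r.
ac_close.
Qed.

Variable C : R.
Hypothesis hC : forall X, C * X = X * C.
Definition etaC X := C * X.
Lemma eta_add : addf etaC.
Proof. by move=> x y; rewrite /etaC mulrDr. Qed.
Lemma eta_condP : condP etaC.
Proof.
move=> U V h1 h2; rewrite /etaC.
rewrite -!mulrA h1 h2 mulr0 !mulrA -!hC -!mulrA h1 h2 mulr0.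
by rewrite !addr0.
Qed.
Lemma eta_mult X : etaC X = etaC 1 * X /\ etaC X = X * etaC 1.
Proof. by rewrite /etaC mulr1 hC. Qed.
End Glue.

Section Comp.
Variables (A B : pzRingType) (M N : zmodType) (G : GMRing A B M N).
Hypotheses (hA : two_torsion_free A) (hB : two_torsion_free B).
Local Notation "'E11' a" := ((Gmx a 0 0 0 : gU G)) (at level 10, a at level 9).
Local Notation "'E12' a" := ((Gmx 0 a 0 0 : gU G)) (at level 10, a at level 9).
Local Notation "'E21' a" := ((Gmx 0 0 a 0 : gU G)) (at level 10, a at level 9).
Local Notation "'E22' a" := ((Gmx 0 0 0 a : gU G)) (at level 10, a at level 9).
Variable phi : gU G -> gU G.
Hypothesis hadd : forall x y, phi (x + y) = phi x + phi y.
Hypothesis hP : forall U V : gU G, U * V = 0 -> V * U = 0 ->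
  phi U * V + V * phi U + (U * phi V + phi V * U) = 0.
Hypothesis hm0 : g12 (phi (E11 1)) = 0.
Hypothesis hn0 : g21 (phi (E11 1)) = 0.

Lemma phi0 : phi 0 = 0. Proof. exact: (@add0_gen (gU G) (gU G) phi hadd). Qed.
Lemma phiN x : phi (- x) = - phi x. Proof. exact: (@addN_gen (gU G) (gU G) phi hadd). Qed.

Ltac expandP := rewrite ?(e11D, e12D, e21D, e22D, e11N, e12N, e21N, e22N, hadd, phiN, phi0).

Lemma two0A (x : A) : x + x = 0 -> x = 0.
Proof. by move=> h; apply: hA; rewrite mulr2n. Qed.
Lemma two0B (x : B) : x + x = 0 -> x = 0.
Proof. by move=> h; apply: hB; rewrite mulr2n. Qed.

Lemma Pcomp U V : U * V = 0 -> V * U = 0 ->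
  [/\ g11 (phi U * V + V * phi U + (U * phi V + phi V * U)) = 0,
      g12 (phi U * V + V * phi U + (U * phi V + phi V * U)) = 0,
      g21 (phi U * V + V * phi U + (U * phi V + phi V * U)) = 0 &
      g22 (phi U * V + V * phi U + (U * phi V + phi V * U)) = 0].
Proof. by move=> h1 h2; rewrite (hP h1 h2). Qed.

Ltac gsolve := gproj; first [ done | (gnormA; first [done | ac_close]) | (gnormB; first [done|ac_close])].
Ltac zprod := apply: gext; gsolve.
Ltac getP U V := let h1 := fresh "h1" in let h2 := fresh "h2" in
  (have h1 : U * V = 0 by zprod);
  (have h2 : V * U = 0 by zprod);
  have := Pcomp h1 h2; clear h1 h2.

Lemma P1 a b : [/\ a * g11 (phi (E22 b)) + g11 (phi (E22 b)) * a = 0,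
   g22 (phi (E11 a)) * b + b * g22 (phi (E11 a)) = 0,
   actMB G (g12 (phi (E11 a))) b + actAM G a (g12 (phi (E22 b))) = 0 &
   actBN G b (g21 (phi (E11 a))) + actNA G (g21 (phi (E22 b))) a = 0].
Proof.
getP (E11 a) (E22 b); case.
by expandP; gproj; gnormA => H11 H12 H21 H22; split.
Qed.

Lemma ep11 b : g11 (phi (E22 b)) = 0.
Proof. by have [H _ _ _] := P1 1 b; apply: two0A; rewrite mul1r mulr1 in H. Qed.
Lemma al22 a : g22 (phi (E11 a)) = 0.
Proof. by have [_ H _ _] := P1 a 1; apply: two0B; rewrite mul1r mulr1 in H. Qed.
Lemma ep12 b : g12 (phi (E22 b)) = 0.
Proof. by have [_ _ H _] := P1 1 b; rewrite hm0 actMB0l add0r actAM_1 in H. Qed.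
Lemma al12 a : g12 (phi (E11 a)) = 0.
Proof. by have [_ _ H _] := P1 a 1; rewrite ep12 actAM0r addr0 actMB_1 in H. Qed.
Lemma ep21 b : g21 (phi (E22 b)) = 0.
Proof. by have [_ _ _ H] := P1 1 b; rewrite hn0 actBN0r add0r actNA_1 in H. Qed.
Lemma al21 a : g21 (phi (E11 a)) = 0.
Proof. by have [_ _ _ H] := P1 a 1; rewrite ep21 actNA0l addr0 actBN_1 in H. Qed.

Ltac facts := rewrite ?(ep11, al22, ep12, al12, ep21, al21).
Ltac showH := match goal with |- ?g => idtac "GOAL"; idtac g end.

Lemma P2 (m m' : M) : sig G m' (g21 (phi (E12 m))) + sig G m (g21 (phi (E12 m'))) = 0 /\
   rh G (g21 (phi (E12 m))) m' + rh G (g21 (phi (E12 m'))) m = 0.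
Proof.
getP (E12 m) (E12 m'); case.
by expandP; gproj; facts; gnormA => H1 _ _ H4.
Qed.
Lemma P6 (n n' : N) : sig G (g12 (phi (E21 n))) n' + sig G (g12 (phi (E21 n'))) n = 0 /\
   rh G n' (g12 (phi (E21 n))) + rh G n (g12 (phi (E21 n'))) = 0.
Proof.
getP (E21 n) (E21 n'); case.
by expandP; gproj; facts; gnormA => H1 _ _ H4.
Qed.
Lemma be21sig m : sig G m (g21 (phi (E12 m))) = 0.
Proof. by apply: two0A; case: (P2 m m). Qed.
Lemma be21rh m : rh G (g21 (phi (E12 m))) m = 0.
Proof. by apply: two0B; case: (P2 m m). Qed.
Lemma ga12sig n : sig G (g12 (phi (E21 n))) n = 0.
Proof. by apply: two0A; case: (P6 n n). Qed.
Lemma ga12rh n : rh G n (g12 (phi (E21 n))) = 0.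
Proof. by apply: two0B; case: (P6 n n). Qed.

Lemma be11 m : g11 (phi (E12 m)) = 0.
Proof.
getP (E11 1 + E12 m) (E22 1 - E12 m); case=> H _ _ _.
move: H; expandP; gproj; facts; gnormA; rewrite ?be21sig => H.
by apply: two0A; apply: (use_neg H); ac_close.
Qed.
Lemma be22 m : g22 (phi (E12 m)) = 0.
Proof.
getP (E11 1 + E12 m) (E22 1 - E12 m); case=> _ _ _ H.
move: H; expandP; gproj; facts; gnormA; rewrite ?be21rh => H.
by apply: two0B; apply: (use_pos H); ac_close.
Qed.
Lemma ga11 n : g11 (phi (E21 n)) = 0.
Proof.
getP (E11 1 + E21 n) (E22 1 - E21 n); case=> H _ _ _.
move: H; expandP; gproj; facts; gnormA; rewrite ?ga12sig => H.
by apply: two0A; apply: (use_neg H); ac_close.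
Qed.
Lemma ga22 n : g22 (phi (E21 n)) = 0.
Proof.
getP (E11 1 + E21 n) (E22 1 - E21 n); case=> _ _ _ H.
move: H; expandP; gproj; facts; gnormA; rewrite ?ga12rh => H.
by apply: two0B; apply: (use_pos H); ac_close.
Qed.
Ltac facts2 := rewrite ?(ep11, al22, ep12, al12, ep21, al21, be11, be22, ga11, ga22).

Lemma F12 a m b : actMB G (g12 (phi (E12 (actAM G a m)))) b + actAM G a (actMB G m (g22 (phi (E22 b))))
  = actAM G (g11 (phi (E11 a))) (actMB G m b) + actAM G a (g12 (phi (E12 (actMB G m b)))).
Proof.
getP (E11 a + E12 (actAM G a m)) (E22 b - E12 (actMB G m b)); case=> _ H _ _.
by move: H; expandP; gproj; facts2; gnormA => H; apply: (use_lin H); ac_close.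
Qed.
Lemma F21 a m b : actBN G b (g21 (phi (E12 (actAM G a m)))) = actNA G (g21 (phi (E12 (actMB G m b)))) a.
Proof.
getP (E11 a + E12 (actAM G a m)) (E22 b - E12 (actMB G m b)); case=> _ _ H _.
by move: H; expandP; gproj; facts2; gnormA => H; apply: (use_lin H); ac_close.
Qed.
Lemma G12 a n b : actMB G (g12 (phi (E21 (actNA G n a)))) b = actAM G a (g12 (phi (E21 (actBN G b n)))).
Proof.
getP (E11 a + E21 (actNA G n a)) (E22 b - E21 (actBN G b n)); case=> _ H _ _.
by move: H; expandP; gproj; facts2; gnormA => H; apply: (use_lin H); ac_close.
Qed.
Lemma G21 a n b : actBN G b (g21 (phi (E21 (actNA G n a)))) + actNA G (actBN G (g22 (phi (E22 b))) n) a
  = actNA G (actBN G b n) (g11 (phi (E11 a))) + actNA G (g21 (phi (E21 (actBN G b n)))) a.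
Proof.
getP (E11 a + E21 (actNA G n a)) (E22 b - E21 (actBN G b n)); case=> _ _ H _.
by move: H; expandP; gproj; facts2; gnormA => H; apply: (use_lin H); ac_close.
Qed.

Let c1 := g11 (phi (E11 1)).
Let c2 := g22 (phi (E22 1)).

Lemma c1m m : actAM G c1 m = actMB G m c2.
Proof.
have := F12 1 m 1; rewrite !actAM_1 !actMB_1 => /eqP; rewrite -subr_eq0 => /eqP H.
by apply: (use_linN H); ac_close.
Qed.
Lemma c2n n : actBN G c2 n = actNA G n c1.
Proof.
have := G21 1 n 1; rewrite !actNA_1 !actBN_1 => /eqP; rewrite -subr_eq0 => /eqP H.
by apply: (use_lin H); ac_close.
Qed.
Lemma c1c a : c1 * a = a * c1.
Proof.
apply/eqP; rewrite -subr_eq0; apply/eqP.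
apply: (@faithful_A _ _ _ _ G) => m.
by rewrite actAM_addl actAMNl !actAM_mul !c1m actM_assoc subrr.
Qed.
Lemma c2c b : c2 * b = b * c2.
Proof.
apply/eqP; rewrite -subr_eq0; apply/eqP; apply: (@faithful_B _ _ _ _ G) => m.
by rewrite actMB_addr actMBNr !actMB_mul -!c1m actM_assoc subrr.
Qed.
Lemma phi1 : phi 1 = Gmx c1 0 0 c2.
Proof.
have -> : (1 : gU G) = E11 1 + E22 1 by apply: gext; rewrite /= ?addr0 ?add0r.
by rewrite hadd; apply: gext; gproj; facts2; rewrite ?addr0 ?add0r.
Qed.
Lemma phi1C X : phi 1 * X = X * phi 1.
Proof.
rewrite phi1; case: X => a m n b; apply: gext; gproj; gsimp0.
- by rewrite c1c.
- by rewrite c1m.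
- by rewrite c2n.
- by rewrite c2c.
Qed.

Hypothesis h1 : phi 1 = 0.
Lemma c10 : c1 = 0. Proof. by have := congr1 (@g11 _ _ _ _) phi1; rewrite h1. Qed.
Lemma c20 : c2 = 0. Proof. by have := congr1 (@g22 _ _ _ _) phi1; rewrite h1. Qed.

Lemma B12l a m : g12 (phi (E12 (actAM G a m))) = actAM G a (g12 (phi (E12 m))) + actAM G (g11 (phi (E11 a))) m.
Proof.
have := F12 a m 1; rewrite -/c2 c20 actMB0r actAM0r !actMB_1 addr0 => ->; by rewrite addrC.
Qed.
Lemma B12r m b : g12 (phi (E12 (actMB G m b))) = actMB G (g12 (phi (E12 m))) b + actMB G m (g22 (phi (E22 b))).
Proof.
by have := F12 1 m b; rewrite -/c1 c10 actAM0l add0r !actAM_1 => <-.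
Qed.
Lemma B21l a m : g21 (phi (E12 (actAM G a m))) = actNA G (g21 (phi (E12 m))) a.
Proof. by have := F21 a m 1; rewrite actBN_1 actMB_1. Qed.
Lemma B21r m b : g21 (phi (E12 (actMB G m b))) = actBN G b (g21 (phi (E12 m))).
Proof. by have := F21 1 m b; rewrite actNA_1 actAM_1. Qed.
Lemma G12l a n : g12 (phi (E21 (actNA G n a))) = actAM G a (g12 (phi (E21 n))).
Proof. by have := G12 a n 1; rewrite actMB_1 actBN_1. Qed.
Lemma G12r n b : g12 (phi (E21 (actBN G b n))) = actMB G (g12 (phi (E21 n))) b.
Proof. by have := G12 1 n b; rewrite actAM_1 actNA_1. Qed.
Lemma G21l a n : g21 (phi (E21 (actNA G n a))) = actNA G (g21 (phi (E21 n))) a + actNA G n (g11 (phi (E11 a))).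
Proof.
have := G21 a n 1; rewrite -/c2 c20 actBN0l actNA0l addr0 !actBN_1 => ->; by rewrite addrC.
Qed.
Lemma G21r n b : g21 (phi (E21 (actBN G b n))) = actBN G b (g21 (phi (E21 n))) + actBN G (g22 (phi (E22 b))) n.
Proof.
have := G21 1 n b; rewrite -/c1 c10 actNA0r add0r !actNA_1 => <-; by rewrite addrC.
Qed.

Lemma alM x y : actAM G (g11 (phi (E11 x))) y = g12 (phi (E12 (actAM G x y))) - actAM G x (g12 (phi (E12 y))).
Proof. by rewrite B12l addrC addKr. Qed.
Lemma epM y x : actMB G y (g22 (phi (E22 x))) = g12 (phi (E12 (actMB G y x))) - actMB G (g12 (phi (E12 y))) x.
Proof. by rewrite B12r addrC addKr. Qed.

Lemma Dal a a' : g11 (phi (E11 (a * a'))) = g11 (phi (E11 a)) * a' + a * g11 (phi (E11 a')).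
Proof.
apply/eqP; rewrite -subr_eq0; apply/eqP; apply: (@faithful_A _ _ _ _ G) => m.
rewrite !actAM_addl !actAMNl !actAM_addl !actAM_mul !alM !actAM_mul.
gnormA; ac_close.
Qed.
Lemma Dep b b' : g22 (phi (E22 (b * b'))) = g22 (phi (E22 b)) * b' + b * g22 (phi (E22 b')).
Proof.
apply/eqP; rewrite -subr_eq0; apply/eqP; apply: (@faithful_B _ _ _ _ G) => m.
rewrite !actMB_addr !actMBNr !actMB_addr !actMB_mul !epM !actMB_mul.
gnormA; ac_close.
Qed.

Lemma phiG a m n b : phi (Gmx a m n b) = phi (E11 a) + phi (E12 m) + phi (E21 n) + phi (E22 b).
Proof. by rewrite gdecomp !hadd. Qed.
Lemma c10' : g11 (phi (E11 1)) = 0. Proof. exact: c10. Qed.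
Lemma c20' : g22 (phi (E22 1)) = 0. Proof. exact: c20. Qed.
Lemma X0 m n : g11 (phi (E11 (sig G m n))) = sig G (g12 (phi (E12 m))) n + sig G m (g21 (phi (E21 n))).
Proof.
getP (Gmx 1 m n (rh G n m) : gU G) (Gmx (- sig G m n) m n (-1) : gU G); case=> H _ _ _.
move: H; rewrite (phiG 1 m n (rh G n m)) (phiG (- sig G m n) m n (-1)).
expandP; gproj; facts2; rewrite ?c10' ?c20'; gnormA; rewrite ?be21sig ?ga12sig => H.
apply/eqP; rewrite -subr_eq0; apply/eqP; apply: two0A; apply: (use_neg H); ac_close.
Qed.
Lemma Y0 m n : g22 (phi (E22 (rh G n m))) = rh G n (g12 (phi (E12 m))) + rh G (g21 (phi (E21 n))) m.
Proof.
getP (Gmx 1 m n (rh G n m) : gU G) (Gmx (- sig G m n) m n (-1) : gU G); case=> _ _ _ H.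
move: H; rewrite (phiG 1 m n (rh G n m)) (phiG (- sig G m n) m n (-1)).
expandP; gproj; facts2; rewrite ?c10' ?c20'; gnormA; rewrite ?be21rh ?ga12rh => H.
apply/eqP; rewrite -subr_eq0; apply/eqP; apply: two0B; apply: (use_neg H); ac_close.
Qed.
Lemma jordan X : phi (X * X) = phi X * X + X * phi X.
Proof.
case: X => a m n b.
have -> : (Gmx a m n b : gU G) * Gmx a m n b = Gmx (a * a + sig G m n) (actAM G a m + actMB G m b)
   (actBN G b n + actNA G n a) (rh G n m + b * b) by [].
rewrite (phiG (a * a + sig G m n)) (phiG a m n b).
expandP; apply: gext; gproj; facts2;
 rewrite ?(Dal, Dep, X0, Y0, B12l, B12r, B21l, B21r, G12l, G12r, G21l, G21r).
all: try (gnormA; rewrite ?be21sig ?ga12sig ?be21rh ?ga12rh ?addr0 ?add0r; ac_close).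
all: try (gnormB; rewrite ?be21sig ?ga12sig ?be21rh ?ga12rh ?addr0 ?add0r; ac_close).
Qed.
End Comp.


Unset Implicit Arguments.
Theorem theorem2p1 (A B : pzRingType) (M N : zmodType) (G : GMRing A B M N)
    (hA : two_torsion_free A) (hB : two_torsion_free B)
    (phi : gmx A B M N -> gmx A B M N)
    (hadd : g_additive phi) (hP : g_condP G phi) :
  (exists delta eta : gmx A B M N -> gmx A B M N,
      g_jordan_derivation G delta /\ g_multiplier G eta /\
      forall X, phi X = gadd (delta X) (eta X)) /\
  (phi (gone A B M N) = gzero A B M N -> g_jordan_derivation G phi).
Proof.
pose f : gU G -> gU G := phi.
have hadd' : @addf (gU G) f := hadd.
have hP' : @condP (gU G) f := hP.
pose m0 := g12 (f (Gmx 1 0 0 0 : gU G)).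
pose n0 := g21 (f (Gmx 1 0 0 0 : gU G)).
pose T : gU G := Gmx 0 (- m0) n0 0.
pose psi := fun X : gU G => f X - ad T X.
have psi_add : addf psi := addf_sub hadd' (ad_add T).
have psi_P : condP psi := condP_sub hP' (ad_condP T).
have psi_m0 : g12 (psi (Gmx 1 0 0 0 : gU G)) = 0.
  rewrite /psi /ad /T; gproj; gsimp0; rewrite ?actAM_1 -/m0; ac_close.
have psi_n0 : g21 (psi (Gmx 1 0 0 0 : gU G)) = 0.
  rewrite /psi /ad /T; gproj; gsimp0; rewrite ?actNA_1 -/n0; ac_close.
have hC := phi1C hA hB psi_add psi_P psi_m0 psi_n0.
pose C := psi 1.
pose eta := etaC C.
pose chi := fun X => psi X - eta X.
have chi_add : addf chi := addf_sub psi_add (eta_add C).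
have chi_P : condP chi := condP_sub psi_P (eta_condP hC).
have chi_m0 : g12 (chi (Gmx 1 0 0 0 : gU G)) = 0.
  rewrite /chi /eta /etaC g12D g12N psi_m0 g12M /=; gsimp0; reflexivity.
have chi_n0 : g21 (chi (Gmx 1 0 0 0 : gU G)) = 0.
  rewrite /chi /eta /etaC hC g21D g21N psi_n0 g21M /=; gsimp0; reflexivity.
have chi1 : chi 1 = 0 by rewrite /chi /eta /etaC mulr1 subrr.
have jchi : jord chi := jordan hA hB chi_add chi_P chi_m0 chi_n0 chi1.
split.
  exists (fun X => f X - eta X), eta.
  split; [|split].
  - split; first exact: (addf_sub hadd' (eta_add C)).
    apply: (jord_ext (g := fun X => chi X + ad T X)); last exact: jord_add jchi (ad_jord T).
    by move=> X; rewrite /chi /psi; ac_close.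
  - split; first exact: (eta_add C).
    by move=> X; apply: (eta_mult hC).
  - move=> X; change (f X = (f X - eta X) + eta X); by rewrite subrK.
move=> h1.
have h1' : f 1 = 0 := h1.
have psi1 : psi 1 = 0 by rewrite /psi /ad h1' mulr1 mul1r !subrr.
have jpsi : jord psi := jordan hA hB psi_add psi_P psi_m0 psi_n0 psi1.
split; first exact: hadd.
apply: (jord_ext (g := fun X => psi X + ad T X)); last exact: jord_add jpsi (ad_jord T).
by move=> X; rewrite /psi; apply/esym; exact: subrK.
Qed.
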